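(* Let $(T^{E}_{m},T^{\mathbb{K}}_{m})_{m\in M}$ be a strong generator for $(\mathcal{FV},E)$. If one of the following conditions holds, then $\mathcal{FV}(\Omega,E)\subset\mathcal{FV}(\Omega,E)_\kappa$: (a) $\mathcal{FV}(\Omega)$ is a semi-Montel space; (b) for every $f\in\mathcal{FV}(\Omega,E)$, $j\in J$, $m\in M$ there is a precompact set $K\subset E$ with $N_{j,m}(f)\subset K$; (c) $E$ is a semi-Montel space or a Schwartz space; (d) there are a set $X$, a family $\mathfrak{K}$ of sets with $\bigcup_{K\in\mathfrak{K}}K\subset X$ and a map $\pi\colon\bigcup_{m\in M}\omega_m\to X$ such that every $f\in\mathcal{FV}(\Omega,E)$ satisfies: for all $\varepsilon>0$, $j\in J$, $m\in M$, $\alpha\in\mathfrak{A}$ there is $K\in\mathfrak{K}$ with (i) $\sup_{x\in\omega_m,\ \pi(x)\notin K}p_\alpha(T^E_m(f)(x))\nu_{j,m}(x)<\varepsilon$ and (ii) $\{T^E_m(f)(x)\nu_{j,m}(x): x\in\omega_m,\ \pi(x)\in K\}$ is precompact in $E$.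
   Context: $\mathbb{K}\in\{\mathbb{R},\mathbb{C}\}$, $E$ a non-trivial locally convex Hausdorff space over $\mathbb{K}$ with directed fundamental system of seminorms $(p_\alpha)_{\alpha\in\mathfrak{A}}$. Let $\Omega$ be a non-empty set, $J,M$ non-empty index sets, $(\omega_m)_{m\in M}$ non-empty sets and $\nu_{j,m}\colon\omega_m\to[0,\infty)$ such that for all $m$, $x\in\omega_m$ some $\nu_{j,m}(x)>0$. For $Y\in\{\mathbb{K},E\}$ (for $\mathbb{K}$ only $|\cdot|$), let $\operatorname{AP}(\Omega,Y)\subset Y^\Omega$ be a linear subspace and $T^Y_m\colon\operatorname{dom}T^Y_m\to Y^{\omega_m}$ linear maps on linear subspaces $\operatorname{dom}T^Y_m\subset Y^\Omega$. $\mathcal{FV}(\Omega,Y):=\{f\in\operatorname{AP}(\Omega,Y)\cap\bigcap_m\operatorname{dom}T^Y_m: |f|_{j,m,\alpha}:=\sup_{x\in\omega_m}p_\alpha(T^Y_m(f)(x))\nu_{j,m}(x)<\infty\ \forall j,m,\alpha\}$ with these seminorms; $\mathcal{FV}(\Omega):=\mathcal{FV}(\Omega,\mathbb{K})$. Dom-space: Hausdorff, directed seminorms, and for $Y=\mathbb{K}$ all point evaluations $\delta_x$ are in $\mathcal{FV}(\Omega)'$. Generator for $(\mathcal{FV},E)$: $(T^E_m,T^{\mathbb{K}}_m)_{m\in M}$ with $\mathcal{FV}(\Omega)$, $\mathcal{FV}(\Omega,E)$ dom-spaces over the same $J,M,\omega_m,\nu_{j,m}$. Strong: for all $e'\in E'$,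 $f\in\mathcal{FV}(\Omega,E)$, $m$: $e'\circ f\in\operatorname{AP}(\Omega,\mathbb{K})\cap\operatorname{dom}T^{\mathbb{K}}_m$ and $T^{\mathbb{K}}_m(e'\circ f)=e'\circ T^E_m(f)$ on $\omega_m$. $\mathcal{FV}(\Omega,E)_\sigma:=\{f\colon\Omega\to E: e'\circ f\in\mathcal{FV}(\Omega)\ \forall e'\in E'\}$, $R_f(e'):=e'\circ f$; $B_\alpha:=\{x\in E: p_\alpha(x)<1\}$ with polar $B_\alpha^\circ$; $\mathcal{FV}(\Omega,E)_\kappa:=\{f\in\mathcal{FV}(\Omega,E)_\sigma: R_f(B_\alpha^\circ)$ relatively compact in $\mathcal{FV}(\Omega)$ for every $\alpha\}$. $N_{j,m}(f):=\{T^E_m(f)(x)\nu_{j,m}(x): x\in\omega_m\}$. *)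

(* Defs.v *)
From mathcomp Require Import all_boot all_algebra.
From mathcomp Require Import classical_sets reals constructive_ereal ereal.
From mathcomp Require Import complex.
From Stdlib Require List.
Unset Printing Implicit Defensive.
Import GRing.Theory Num.Theory.
Local Open Scope ring_scope.
Local Open Scope classical_set_scope.

(* Generic topological notions for a set S (a subset of a type V with a     *)
(* subtraction) carrying the locally convex topology generated by a         *)
(* DIRECTED family of (extended-real valued) seminorms sn : I -> V -> \bar R.*)
(* Since the family is directed, the open balls                              *)
(*   {y | sn i (y - x) < e}  (i in I, e > 0)                                *)
(* form a neighbourhood basis of x.                                         *)
Section SeminormTopology.
Context {R : realType} {V I : Type}.
Variables (sub : V -> V -> V) (sn : I -> V -> \bar R).

Definition sball (i : I) (x : V) (e : R) : set V :=
  [set y | (sn i (sub y x) < e%:E)%E].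

Definition sopen (S U : set V) : Prop :=
  U `<=` S /\
  forall x, U x -> exists i (e : R), 0 < e /\ (sball i x e `&` S `<=` U).

Definition sclosure (S A : set V) : set V :=
  [set x | S x /\ forall i (e : R), 0 < e -> exists a, A a /\ sball i x e a].

Definition scompact (S C : set V) : Prop :=
  C `<=` S /\
  forall (Idx : Type) (U : Idx -> set V),
    (forall k, sopen S (U k)) ->
    C `<=` (fun x => exists k, U k x) ->
    exists s : seq Idx, C `<=` (fun x => exists k, List.In k s /\ U k x).

Definition srelcompact (S A : set V) : Prop :=
  A `<=` S /\ scompact S (sclosure S A).

Definition sbounded (S A : set V) : Prop :=
  A `<=` S /\ forall i, exists C : R, forall a, A a -> (sn i a <= C%:E)%E.

Definition ssemi_montel (S : set V) : Prop :=
  forall A, sbounded S A -> srelcompact S A.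

Definition sprecompact (A : set V) : Prop :=
  forall i (e : R), 0 < e ->
    exists s : seq V, A `<=` (fun x => exists v, List.In v s /\ sball i v e x).

Definition sschwartz : Prop :=
  forall i, exists i', forall (e : R), 0 < e ->
    exists s : seq V,
      [set x | (sn i' x < 1%:E)%E] `<=` (fun x => exists v, List.In v s /\ sball i v e x).

Definition shausdorff (z0 : V) (S : set V) : Prop :=
  forall x, S x -> (forall i, sn i x = 0%E) -> x = z0.

Definition sdirected (S : set V) : Prop :=
  forall i1 i2 : I, exists (i3 : I) (C : R), 0 < C /\
    forall x, S x -> (sn i1 x <= C%:E * sn i3 x)%E /\ (sn i2 x <= C%:E * sn i3 x)%E.

End SeminormTopology.

(* The scalar field K (R or C), with absolute value absK : K -> R and the   *)
(* embedding iota : R -> K of the reals.                                    *)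
Section LCS.
Context {R : realType} {K : numFieldType}.
Variables (absK : K -> R).
Context {E : lmodType K} {A : Type}.
Variable (p : A -> E -> R).

Definition pE : A -> E -> \bar R := fun a x => (p a x)%:E.
Definition subE : E -> E -> E := fun x y => x - y.

Definition is_lcHs : Prop :=
  [/\ inhabited A,
      (exists x : E, x != 0),
      (forall a x, 0 <= p a x) /\
      (forall a x y, p a (x + y) <= p a x + p a y) /\
      (forall a (l : K) x, p a (l *: x) = absK l * p a x),
      sdirected pE setT
    & shausdorff pE 0 setT].

Definition edual (e : E -> K) : Prop :=
  (forall (l : K) x y, e (l *: x + y) = l * e x + e y) /\
  (forall x (eps : R), 0 < eps -> exists a (d : R), 0 < d /\
     forall y, sball subE pE a x d y -> absK (e y - e x) < eps).

Definition semi_montelE : Prop := ssemi_montel subE pE setT.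
Definition schwartzE : Prop := sschwartz subE pE.
Definition precompactE (B : set E) : Prop := sprecompact subE pE B.

Definition polarB (a : A) : set (E -> K) :=
  [set e | edual e /\ forall x, p a x < 1 -> absK (e x) <= 1].

End LCS.

Section FV.
Context {R : realType} {K : numFieldType}.
Variables (absK : K -> R).
Context {E : lmodType K} {A : Type}.
Variable (p : A -> E -> R).
Context {Omega J M : Type} {omega : M -> Type}.
Variable (nu : J -> forall m, omega m -> R).

Definition lin_subspaceK (S : set (Omega -> K)) : Prop :=
  S (fun _ => 0) /\
  forall (l : K) f g, S f -> S g -> S (fun x => l * f x + g x).
Definition lin_subspaceE (S : set (Omega -> E)) : Prop :=
  S (fun _ => 0) /\
  forall (l : K) f g, S f -> S g -> S (fun x => l *: f x + g x).
Definition lin_onK {Y : Type} (S : set (Omega -> K)) (T : (Omega -> K) -> Y -> K) : Prop :=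
  forall (l : K) f g, S f -> S g ->
    T (fun x => l * f x + g x) = (fun y => l * T f y + T g y).
Definition lin_onE {Y : Type} (S : set (Omega -> E)) (T : (Omega -> E) -> Y -> E) : Prop :=
  forall (l : K) f g, S f -> S g ->
    T (fun x => l *: f x + g x) = (fun y => l *: T f y + T g y).

Variables (APK : set (Omega -> K)) (domK : M -> set (Omega -> K))
          (TK : forall m : M, (Omega -> K) -> omega m -> K).
Variables (APE : set (Omega -> E)) (domE : M -> set (Omega -> E))
          (TE : forall m : M, (Omega -> E) -> omega m -> E).

Definition snK (jm : J * M) (f : Omega -> K) : \bar R :=
  let: (j, m) := jm in
  ereal_sup (range (fun x : omega m => (absK (TK m f x) * nu j m x)%:E)).
Definition snE (jma : J * M * A) (f : Omega -> E) : \bar R :=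
  let: (j, m, a) := jma in
  ereal_sup (range (fun x : omega m => (p a (TE m f x) * nu j m x)%:E)).

Definition subK_fun : (Omega -> K) -> (Omega -> K) -> Omega -> K :=
  fun f g x => f x - g x.
Definition subE_fun : (Omega -> E) -> (Omega -> E) -> Omega -> E :=
  fun f g x => f x - g x.

Definition FVK : set (Omega -> K) :=
  [set f : Omega -> K | APK f /\ (forall m, domK m f) /\ forall jm, (snK jm f < +oo)%E].
Definition FVE : set (Omega -> E) :=
  [set f : Omega -> E | APE f /\ (forall m, domE m f) /\ forall jma, (snE jma f < +oo)%E].

Definition dom_spaceK : Prop :=
  [/\ shausdorff snK (fun _ => 0) FVK,
      sdirected snK FVK
    & forall x : Omega,
        (* the point evaluation delta_x is continuous on FV(Omega)
           (it is trivially linear) *)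
        forall f, FVK f -> forall (eps : R), 0 < eps ->
          exists jm (d : R), 0 < d /\
            forall g, FVK g -> sball subK_fun snK jm f d g ->
              absK (g x - f x) < eps].
Definition dom_spaceE : Prop :=
  shausdorff snE (fun _ => 0) FVE /\ sdirected snE FVE.

Definition generator : Prop :=
  [/\ lin_subspaceK APK /\ lin_subspaceE APE,
      (forall m, lin_subspaceK (domK m) /\ lin_onK (domK m) (TK m)),
      (forall m, lin_subspaceE (domE m) /\ lin_onE (domE m) (TE m)),
      dom_spaceK & dom_spaceE].

Definition strong_generator : Prop :=
  generator /\
  forall e, edual absK p e -> forall f, FVE f -> forall m,
    APK (e \o f) /\ domK m (e \o f) /\ TK m (e \o f) = e \o TE m f.

Definition FVE_sigma : set (Omega -> E) :=
  [set f : Omega -> E | forall e, edual absK p e -> FVK (e \o f)].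
Definition Rf (f : Omega -> E) : (E -> K) -> Omega -> K := fun e => e \o f.
Definition FVE_kappa : set (Omega -> E) :=
  [set f : Omega -> E | FVE_sigma f /\
     forall a, srelcompact subK_fun snK FVK (Rf f @` polarB absK p a)].

Variable (iota : R -> K).
Definition Njm (j : J) (m : M) (f : Omega -> E) : set E :=
  [set iota (nu j m x) *: TE m f x | x in [set: omega m]].

Definition cond_a : Prop := ssemi_montel subK_fun snK FVK.
Definition cond_b : Prop :=
  forall f, FVE f -> forall j m, exists C : set E, precompactE p C /\ Njm j m f `<=` C.
Definition cond_c : Prop := semi_montelE p \/ schwartzE p.
Definition cond_d : Prop :=
  exists (X : Type) (KK : set (set X)) (pi : forall m, omega m -> X),
    forall f, FVE f -> forall (eps : R), 0 < eps -> forall j m a,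
      exists C : set X, KK C /\
        (ereal_sup [set (p a (TE m f x) * nu j m x)%:E | x in [set x : omega m | ~ C (pi m x)]]
           < eps%:E)%E /\
        precompactE p [set iota (nu j m x) *: TE m f x | x in [set x : omega m | C (pi m x)]].

End FV.

Definition lemma3p13_stmt (R : realType) (K : numFieldType)
    (absK : K -> R) (iota : R -> K) : Prop :=
  forall (E : lmodType K) (A : Type) (p : A -> E -> R),
  is_lcHs absK p ->
  forall (Omega J M : Type) (omega : M -> Type) (nu : J -> forall m, omega m -> R),
  inhabited Omega -> inhabited J -> inhabited M -> (forall m, inhabited (omega m)) ->
  (forall j m x, 0 <= nu j m x) ->
  (forall m (x : omega m), exists j, 0 < nu j m x) ->
  forall (APK : set (Omega -> K)) (domK : M -> set (Omega -> K))
         (TK : forall m : M, (Omega -> K) -> omega m -> K)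
         (APE : set (Omega -> E)) (domE : M -> set (Omega -> E))
         (TE : forall m : M, (Omega -> E) -> omega m -> E),
  @strong_generator R K absK E A p Omega J M omega nu APK domK TK APE domE TE ->
  @cond_a R K absK Omega J M omega nu APK domK TK \/
  @cond_b R K E A p Omega J M omega nu APE domE TE iota \/
  @cond_c R K E A p \/
  @cond_d R K E A p Omega J M omega nu APE domE TE iota ->
  @FVE R K E A p Omega J M omega nu APE domE TE `<=`
    @FVE_kappa R K absK E A p Omega J M omega nu APK domK TK.

(* Main.v *)
Require Import Defs.
From mathcomp Require Import all_boot all_order all_algebra.
From mathcomp Require Import boolp classical_sets filter reals constructive_ereal ereal.
From mathcomp Require Import complex.
From mathcomp Require Import ring lra.
Import Order.TTheory GRing.Theory Num.Theory.
Local Open Scope ring_scope.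
Local Open Scope classical_set_scope.

Definition ulim_prop {R : realType} {K : numFieldType} (absK : K -> R) :=
  forall (T : Type) (U : set_system T), UltraFilter U ->
  forall (phi : T -> K) (c : R), U [set t | absK (phi t) <= c] ->
  exists L, forall eps, 0 < eps -> U [set t | absK (phi t - L) < eps].

Lemma ulim_real (R : realType) : ulim_prop (fun x : R => `|x|).
Proof.
move=> T U UU phi c Uc.
pose S := [set t : R | U [set x | t <= phi x]].
have S0 : S (- c).
  apply: filterS Uc => x /=; rewrite ler_norml => /andP[] //.
have Sub : ubound S c.
  move=> t St; rewrite leNgt; apply/negP => ct.
  have : U ([set x | t <= phi x] `&` [set t0 | `|phi t0| <= c]) by apply: filterI.
  have -> : [set x | t <= phi x] `&` [set t0 | `|phi t0| <= c] = set0.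
    apply/seteqP; split => // x [/= h1 h2].
    move: h2; rewrite ler_norml => /andP[_ h2].
    by move: (lt_le_trans ct (le_trans h1 h2)); rewrite ltxx.
  by move/filter_not_empty.
have hs : has_sup S by split; [exists (- c)| exists c].
exists (sup S) => eps eps0.
have [t St lt] := sup_adherent (eps0) hs.
have h1 : U [set x | sup S - eps < phi x].
  by apply: filterS St => x /= tx; exact: lt_le_trans lt tx.
have h2 : U [set x | phi x < sup S + eps].
  have [HA|HC] := in_ultra_setVsetC [set x | sup S + eps / 2 <= phi x] UU.
    have := sup_upper_bound hs HA; have : 0 < eps / 2 by rewrite divr_gt0.
    move=> ? ?; exfalso; lra.
  apply: filterS HC => x /= /negP; rewrite -ltNge => h.
  move: h; have : 0 < eps / 2 by rewrite divr_gt0.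
  move=> ? ?; lra.
apply: filterS (filterI h1 h2) => x [/= a b].
rewrite ltr_norml; apply/andP; split; lra.
Qed.

Section Cplx.
Variable R : realType.
Local Notation nc := (@Normc.normc R).

Lemma nc_ge0 (z : R[i]) : 0 <= nc z.
Proof. by case: z => a b /=; exact: sqrtr_ge0. Qed.

Lemma nc_Re (z : R[i]) : `|complex.Re z| <= nc z.
Proof.
case: z => a b /=; rewrite -sqrtr_sqr ler_wsqrtr // lerDl sqr_ge0 //.
Qed.

Lemma nc_Im (z : R[i]) : `|complex.Im z| <= nc z.
Proof.
case: z => a b /=; rewrite -sqrtr_sqr ler_wsqrtr // lerDr sqr_ge0 //.
Qed.

Lemma nc_le (z : R[i]) : nc z <= `|complex.Re z| + `|complex.Im z|.
Proof.
case: z => a b /=.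
have -> : `|a| + `|b| = Num.sqrt ((`|a| + `|b|) ^+ 2).
  by rewrite sqrtr_sqr; apply/esym/ger0_norm; rewrite addr_ge0.
apply: ler_wsqrtr.
rewrite sqrrD -(real_normK (num_real a)) -(real_normK (num_real b)).
have : 0 <= `|a| * `|b| by rewrite mulr_ge0.
move=> h; rewrite -addrA lerD2l addrC lerDl mulrn_wge0 //.
Qed.

Lemma nc_real (r : R) : 0 <= r -> nc (r%:C)%C = r.
Proof. by move=> r0 /=; rewrite expr0n /= addr0 sqrtr_sqr ger0_norm. Qed.

Lemma ulim_cplx : ulim_prop nc.
Proof.
move=> T U UU phi c Uc.
have [L1 H1] := @ulim_real R T U UU (fun t => complex.Re (phi t)) c
  (filterS (fun t (h : nc (phi t) <= c) => le_trans (nc_Re _) h) Uc).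
have [L2 H2] := @ulim_real R T U UU (fun t => complex.Im (phi t)) c
  (filterS (fun t (h : nc (phi t) <= c) => le_trans (nc_Im _) h) Uc).
exists (L1 +i* L2)%C => eps eps0.
have e2 : 0 < eps / 2 by rewrite divr_gt0.
apply: filterS (filterI (H1 _ e2) (H2 _ e2)) => t [/= h1 h2].
apply: (le_lt_trans (nc_le _)).
move: h1 h2; case: (phi t) => a b /= h1 h2.
have -> : eps = eps / 2 + eps / 2 by rewrite -splitr.
exact: ltrD.
Qed.

End Cplx.

Lemma mk_proper T (I : Type) (B : I -> set T) : inhabited I ->
  (forall i, B i !=set0) -> (forall i1 i2, exists i3, B i3 `<=` B i1 `&` B i2) ->
  ProperFilter [set S | exists i, B i `<=` S].
Proof.
move=> [i0] ne dir; apply: Build_ProperFilter_ex.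
  by move=> S [i BS]; have [x Bx] := ne i; exists x; exact: BS.
split.
- by exists i0.
- move=> S1 S2 [i1 h1] [i2 h2]; have [i3 h3] := dir i1 i2; exists i3 => x /h3 [] ? ?.
  by split; [exact: h1|exact: h2].
- by move=> S1 S2 s12 [i h]; exists i => x /h /s12.
Qed.

Lemma fin_ub {R : realType} {x : \bar R} : (x < +oo)%E -> exists c : R, (x <= c%:E)%E.
Proof. case: x => [r| |] h; [by exists r|by rewrite ltxx in h|exists 0; exact: leNye]. Qed.

Section Generic.
Context {R : realType} {K : numFieldType} (absK : K -> R) (iota : R -> K).
Hypothesis ha0 : forall x, 0 <= absK x.
Hypothesis haD : forall x y, absK (x + y) <= absK x + absK y.
Hypothesis haM : forall x y, absK (x * y) = absK x * absK y.
Hypothesis haN : forall x, absK (- x) = absK x.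
Hypothesis ha00 : absK 0 = 0.
Hypothesis ha1 : absK 1 = 1.
Hypothesis haz : forall x, absK x = 0 -> x = 0.
Hypothesis hi : forall r, 0 <= r -> absK (iota r) = r.
Hypothesis hiV : forall r, 0 < r -> iota r * iota r^-1 = 1.
Hypothesis hlim : ulim_prop absK.

Context {E : lmodType K} {A : Type} (p : A -> E -> R).
Hypothesis hE : is_lcHs absK p.

Lemma pge0 a x : 0 <= p a x.
Proof. by case: hE => _ _ [h _]. Qed.
Lemma pD a x y : p a (x + y) <= p a x + p a y.
Proof. by case: hE => _ _ [_ [h _]]. Qed.
Lemma pZ a l x : p a (l *: x) = absK l * p a x.
Proof. by case: hE => _ _ [_ [_ h]]. Qed.
Lemma p0 a : p a 0 = 0.
Proof. by rewrite -(scale0r (0 : E)) pZ ha00 mul0r. Qed.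
Lemma pN a x : p a (- x) = p a x.
Proof. by rewrite -scaleN1r pZ haN ha1 mul1r. Qed.
Lemma pB a x y : p a (x - y) = p a (y - x).
Proof. by rewrite -pN opprB. Qed.

Definition islin (e : E -> K) := forall (l : K) x y, e (l *: x + y) = l * e x + e y.

Section Lin.
Variables (e : E -> K) (he : islin e).
Lemma e0 : e 0 = 0.
Proof.
have := he 1 0 0; rewrite scaler0 addr0 mul1r => h.
by apply/esym/(addrI (e 0)); rewrite addr0 -h.
Qed.
Lemma eZ l x : e (l *: x) = l * e x.
Proof. by have := he l x 0; rewrite addr0 e0 addr0. Qed.
Lemma eD x y : e (x + y) = e x + e y.
Proof. by have := he 1 x y; rewrite scale1r mul1r. Qed.
Lemma eN x : e (- x) = - e x.
Proof. by rewrite -scaleN1r eZ mulN1r. Qed.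
Lemma eB x y : e (x - y) = e x - e y.
Proof. by rewrite eD eN. Qed.

Lemma lin_bound a d : 0 < d -> (forall y, p a y < d -> absK (e y) <= 1) ->
  forall y, absK (e y) <= p a y / d.
Proof.
move=> d0 h y; rewrite ler_pdivlMr //.
apply/ler_addgt0Pr => t t0.
set s := p a y.
have s0 : 0 <= s by exact: pge0.
set lam := d / (s + t).
have st0 : 0 < s + t by rewrite ltr_wpDl.
have lam0 : 0 < lam by rewrite divr_gt0.
have hl : lam * (s + t) = d by rewrite /lam mulfVK // gt_eqF.
have hil : absK (iota lam) = lam by apply: hi; exact: ltW.
have := h (iota lam *: y); rewrite pZ hil eZ haM hil -/s.
have X0 := ha0 (e y).
move=> H; have {}H : lam * absK (e y) <= 1.
  by apply: H; nra.
nra.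
Qed.
End Lin.

Context {Omega J M : Type} {omega : M -> Type} (nu : J -> forall m, omega m -> R).
Hypothesis hnu : forall j m x, 0 <= nu j m x.
Hypothesis hom : forall m, inhabited (omega m).
Hypothesis hM : inhabited M.
Hypothesis hJ : inhabited J.
Variables (APK : set (Omega -> K)) (domK : M -> set (Omega -> K))
          (TK : forall m : M, (Omega -> K) -> omega m -> K).
Variables (APE : set (Omega -> E)) (domE : M -> set (Omega -> E))
          (TE : forall m : M, (Omega -> E) -> omega m -> E).
Hypothesis hsg : strong_generator absK p nu APK domK TK APE domE TE.

Local Notation FVk := (FVK absK nu APK domK TK).
Local Notation snk := (snK absK nu TK).
Local Notation FVe := (FVE p nu APE domE TE).
Local Notation sne := (snE p nu TE).

Lemma snk_elem j m g x : ((absK (TK m g x) * nu j m x)%:E <= snk (j, m) g)%E.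
Proof. by apply: ereal_sup_ubound; exists x. Qed.

Lemma snk_ub j m g c : (forall x, absK (TK m g x) * nu j m x <= c) -> (snk (j,m) g <= c%:E)%E.
Proof. by move=> h; apply: ge_ereal_sup => _ [x _ <-]; rewrite lee_fin; exact: h. Qed.

Lemma snk_ge0 j m g : (0 <= snk (j,m) g)%E.
Proof.
case: (hom m) => x0; apply: le_trans (snk_elem j m g x0).
by rewrite lee_fin mulr_ge0.
Qed.

Lemma sne_elem j m a f x : ((p a (TE m f x) * nu j m x)%:E <= sne (j, m, a) f)%E.
Proof. by apply: ereal_sup_ubound; exists x. Qed.

Lemma absB x y : absK (x - y) <= absK x + absK y.
Proof. by apply: le_trans (haD _ _) _; rewrite haN. Qed.

Lemma sub_FVK g h : FVk g -> FVk h ->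
  FVk (subK_fun g h) /\ forall m, TK m (subK_fun g h) = fun z => TK m g z - TK m h z.
Proof.
move=> [APg [dg sg]] [APh [dh sh]].
have eq : subK_fun g h = (fun x => (-1) * h x + g x).
  by apply: funext => x; rewrite /subK_fun mulN1r addrC.
case: hsg => [[[lAPK _] hK _ _ _] _].
have hT : forall m, TK m (subK_fun g h) = fun z => TK m g z - TK m h z.
  move=> m; rewrite eq ((hK m).2 (-1) h g (dh m) (dg m)).
  by apply: funext => z; rewrite mulN1r addrC.
split => //; split; first by rewrite eq; exact: lAPK.2.
split; first by move=> m; rewrite eq; exact: (hK m).1.2.
move=> [j m].
have [c1 h1] := fin_ub (sg (j, m)).
have [c2 h2] := fin_ub (sh (j, m)).
apply: (le_lt_trans _ (ltry (c1 + c2))).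
apply: snk_ub => x; rewrite hT.
have e1 := le_trans (snk_elem j m g x) h1; rewrite lee_fin in e1.
have e2 := le_trans (snk_elem j m h x) h2; rewrite lee_fin in e2.
apply: le_trans (_ : (absK (TK m g x) + absK (TK m h x)) * nu j m x <= _).
  by apply: ler_wpM2r => //; exact: absB.
by rewrite mulrDl; exact: lerD.
Qed.

Lemma edual_lin {e} : edual absK p e -> islin e.
Proof. by case. Qed.

Lemma edual_bound {e} : edual absK p e -> exists a d, 0 < d /\ forall y, absK (e y) <= p a y / d.
Proof.
move=> he; have [a [d [d0 H]]] := he.2 0 1 ltr01.
exists a, d; split => //; apply: (lin_bound _ (edual_lin he) _ _ d0) => y ya.
apply: ltW; have := H y; rewrite (e0 _ (edual_lin he)) subr0; apply.
by rewrite /sball /pE /subE /= subr0 lte_fin.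
Qed.

Lemma polar_bound a e : polarB absK p a e -> forall y, absK (e y) <= p a y.
Proof.
move=> [he H] y; rewrite -[p a y]divr1.
exact: (lin_bound _ (edual_lin he) _ _ ltr01 H).
Qed.

Lemma sigma e f : edual absK p e -> FVe f ->
  FVk (e \o f) /\ forall m, TK m (e \o f) = e \o TE m f.
Proof.
move=> he hf.
have hs m := hsg.2 e he f hf m.
have hT m : TK m (e \o f) = e \o TE m f by case: (hs m) => _ [].
split => //; split; first by case: hM => m0; case: (hs m0).
split; first by move=> m; case: (hs m) => _ [].
move=> [j m].
have [a [d [d0 hb]]] := edual_bound he.
have [c hc] := fin_ub (hf.2.2 (j, m, a)).
apply: (le_lt_trans _ (ltry (c / d))).
apply: snk_ub => x; rewrite hT /=.
have e1 := le_trans (sne_elem j m a f x) hc; rewrite lee_fin in e1.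
apply: le_trans (_ : p a (TE m f x) / d * nu j m x <= _).
  by apply: ler_wpM2r => //; exact: hb.
by rewrite mulrAC ler_pM2r ?invr_gt0.
Qed.

Lemma ulim_functional a (U : set_system (E -> K)) : UltraFilter U ->
  U (polarB absK p a) ->
  exists es, polarB absK p a es /\
    forall y eps, 0 < eps -> U [set e | absK (e y - es y) < eps].
Proof.
move=> UU UP.
have hy : forall y, exists L, forall eps, 0 < eps -> U [set e | absK (e y - L) < eps].
  move=> y; apply: (hlim _ _ UU (fun e => e y) (p a y)).
  by apply: filterS UP => e /polar_bound; apply.
have [es hes] := choice hy.
have bnd : forall y, absK (es y) <= p a y.
  move=> y; apply/ler_addgt0Pr => eps eps0.
  have [e [Pe He]] := filter_ex (filterI UP (hes y eps eps0)).
  have -> : es y = e y - (e y - es y) by ring.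
  apply: le_trans (absB _ _) _; apply: lerD; first exact: polar_bound.
  exact: ltW.
have lin : islin es.
  move=> l x y; apply/eqP; rewrite -subr_eq0; apply/eqP/haz/le_anti/andP; split => //.
  apply/ler_addgt0Pr => eps eps0; rewrite add0r.
  have e3 : 0 < eps / 3 by rewrite divr_gt0.
  have al0 : 0 < absK l + 1 by rewrite ltr_wpDl.
  have e3' : 0 < eps / 3 / (absK l + 1) by rewrite divr_gt0.
  have [e [[[Pe H1] H2] H3]] := filter_ex (filterI (filterI (filterI UP
     (hes (l *: x + y) _ e3)) (hes x _ e3')) (hes y _ e3)).
  have -> : es (l *: x + y) - (l * es x + es y) =
     - (e (l *: x + y) - es (l *: x + y)) + l * (e x - es x) + (e y - es y).
    by rewrite (edual_lin Pe.1); ring.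
  apply: le_trans (haD _ _) _; apply: le_trans (lerD (haD _ _) (lexx _)) _.
  rewrite haN haM.
  have hl : absK l * absK (e x - es x) <= eps / 3.
    apply: le_trans (_ : absK l * (eps / 3 / (absK l + 1)) <= _).
      by apply: ler_wpM2l => //; exact: ltW.
    rewrite mulrA ler_pdivrMr // mulrC ler_pM2l // lerDl //.
  have -> : eps = eps / 3 + eps / 3 + eps / 3 by field.
  by apply: lerD; [apply: lerD => //|]; exact: ltW.
exists es; split => //; split; last by move=> x hx; apply: le_trans (bnd x) (ltW hx).
split => // x eps eps0; exists a, eps; split => // y.
rewrite /sball /pE /subE /= lte_fin => h.
by rewrite -(eB _ lin); apply: le_lt_trans (bnd _) h.
Qed.

Definition hcov a f := forall j m (eps : R), 0 < eps -> exists s : seq E,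
  forall x : omega m, exists v, List.In v s /\ p a (iota (nu j m x) *: TE m f x - v) < eps.

Lemma uconv a f (U : set_system (E -> K)) es : UltraFilter U ->
  U (polarB absK p a) -> polarB absK p a es ->
  (forall y eps, 0 < eps -> U [set e | absK (e y - es y) < eps]) ->
  hcov a f -> FVe f -> forall j m eps, 0 < eps ->
  U [set e | polarB absK p a e /\
     (snk (j,m) (subK_fun (Rf f e) (Rf f es)) <= eps%:E)%E].
Proof.
move=> UU UP Pes hes hc hf j m eps eps0.
have e3 : 0 < eps / 3 by rewrite divr_gt0.
have [s hs] := hc j m _ e3.
have fin : forall s : seq E, U [set e | polarB absK p a e /\
    forall v, List.In v s -> absK (e v - es v) < eps / 3].
  elim => [|v s' IH]; first by apply: filterS UP => e Pe; split.
  apply: filterS (filterI IH (hes v _ e3)) => e [[Pe H] Hv]; split => //.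
  by move=> w /= [<-|/H].
apply: filterS (fin s) => e [Pe He]; split => //.
have [_ hTe] := sigma e f Pe.1 hf.
have [_ hTes] := sigma es f Pes.1 hf.
have [_ hsub] := sub_FVK _ _ (proj1 (sigma e f Pe.1 hf)) (proj1 (sigma es f Pes.1 hf)).
apply: snk_ub => x; rewrite /Rf hsub hTe hTes /=.
set T := TE m f x.
set z := iota (nu j m x) *: T.
have [v [vin hv]] := hs x.
have linE := edual_lin Pe.1.
have linS := edual_lin Pes.1.
have -> : absK (e T - es T) * nu j m x = absK (e z - es z).
  rewrite /z (eZ _ linE) (eZ _ linS) -mulrBr haM hi // mulrC //.
have -> : e z - es z = e (z - v) + (e v - es v) - es (z - v).
  by rewrite (eB _ linE) (eB _ linS); ring.
apply: ltW; apply: le_lt_trans (absB _ _) _.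
have -> : eps = eps / 3 + eps / 3 + eps / 3 by field.
apply: ltr_leD; first apply: le_lt_trans (haD _ _) _.
 by apply: ltr_leD; [apply: le_lt_trans (polar_bound _ _ Pe _) hv|exact: ltW (He _ vin)].
by apply: le_trans (polar_bound _ _ Pes _) _; apply: ltW.
Qed.

Lemma mulC_lt (C d : R) (y : \bar R) : 0 < C -> (y < (d / C)%:E)%E -> (C%:E * y < d%:E)%E.
Proof.
move=> C0; case: y => [r| |].
- by rewrite !lte_fin ltr_pdivlMr // mulrC.
- by rewrite ltNge leey.
- by move=> _; rewrite gt0_muleNy ?lte_fin // ltNyr.
Qed.

Lemma relcomp a f : FVe f -> hcov a f ->
  srelcompact subK_fun snk FVk (Rf f @` polarB absK p a).
Proof.
move=> hf hc.
set P := polarB absK p a.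
case: hJ => j0; case: hM => m0.
have [[_ _ _ [haus dir _] _] _] := hsg.
have imgF : Rf f @` P `<=` FVk by move=> _ [e Pe <-]; exact: (sigma e f Pe.1 hf).1.
have selfb : forall h, FVk h -> forall i (d : R), 0 < d -> sball subK_fun snk i h d h.
  move=> h Fh [j m] d d0; rewrite /sball.
  apply: le_lt_trans (_ : (snk (j,m) (subK_fun h h) <= 0%:E)%E) _; last by rewrite lte_fin.
  by apply: snk_ub => x; have [_ ->] := sub_FVK h h Fh Fh; rewrite subrr ha00 mul0r.
have imgC : Rf f @` P `<=` sclosure subK_fun snk FVk (Rf f @` P).
  move=> h hI; split; first exact: imgF.
  by move=> i d d0; exists h; split => //; apply: selfb => //; exact: imgF.
have clos : sclosure subK_fun snk FVk (Rf f @` P) `<=` Rf f @` P.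
  move=> g [Fg hcl].
  pose I := ((J * M) * {d : R | 0 < d})%type.
  pose B (i : I) := [set e | P e /\ (snk i.1 (subK_fun (Rf f e) g) < (sval i.2)%:E)%E].
  have FB : ProperFilter [set S | exists i, B i `<=` S].
    apply: mk_proper.
    - by constructor; exact: ((j0, m0), exist (fun d : R => 0 < d) 1 ltr01).
    - move=> [i [d d0]]; have [h [[e Pe <-] hb]] := hcl i d d0.
      by exists e; split.
    - move=> [i1 [d1 d10]] [i2 [d2 d20]].
      have [i3 [C [C0 hC]]] := dir i1 i2.
      have m1 : 0 < Num.min d1 d2 by rewrite lt_min d10 d20.
      have dd : 0 < Num.min d1 d2 / C by rewrite divr_gt0.
      exists (i3, exist (fun d : R => 0 < d) _ dd) => e [Pe /= hb].
      have Fx := (sub_FVK _ _ (sigma e f Pe.1 hf).1 Fg).1.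
      have [h1 h2] := hC _ Fx.
      have hm := mulC_lt C _ _ C0 hb.
      split; split => //=.
      + by apply: le_lt_trans h1 (lt_le_trans hm _); rewrite lee_fin ge_min lexx.
      + by apply: le_lt_trans h2 (lt_le_trans hm _); rewrite lee_fin ge_min lexx orbT.
  have [U [UU sFU]] := ultraFilterLemma FB.
  have UP : U P.
    by apply: sFU; exists ((j0, m0), exist (fun d : R => 0 < d) 1 ltr01) => e [].
  have [es [Pes hes]] := ulim_functional a U UU UP.
  exists es => //.
  have Fes := (sigma es f Pes.1 hf).1.
  have hTes := (sigma es f Pes.1 hf).2.
  have [Fd hd] := sub_FVK g (Rf f es) Fg Fes.
  have z0 : subK_fun g (Rf f es) = (fun _ => 0).
    apply: haus => //; case => j m; apply/le_anti/andP; split; last exact: snk_ge0.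
    apply: snk_ub => x; apply/ler_addgt0Pr => eps eps0; rewrite add0r.
    have e2 : 0 < eps / 2 by rewrite divr_gt0.
    have U1 : U (B ((j, m), exist (fun d : R => 0 < d) _ e2)).
      by apply: sFU; exists ((j, m), exist (fun d : R => 0 < d) _ e2).
    have U2 := uconv a f U es UU UP Pes hes hc hf j m _ e2.
    have [e [[Pe hb] [_ hu]]] := @filter_ex _ U _ _ (filterI U1 U2).
    have hTe := (sigma e f Pe.1 hf).2.
    have F1 := (sigma e f Pe.1 hf).1.
    have [_ hd1] := sub_FVK (Rf f e) g F1 Fg.
    have [_ hd2] := sub_FVK (Rf f e) (Rf f es) F1 Fes.
    have b1 := le_lt_trans (snk_elem j m _ x) hb.
    have b2 := le_trans (snk_elem j m _ x) hu.
    move: b1 b2; rewrite hd hd1 hd2 /= /Rf hTe hTes /= !lte_fin !lee_fin => b1 b2.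
    set T := TE m f x in b1 b2 *.
    have -> : TK m g x - es T = (e T - es T) - (e T - TK m g x) by ring.
    apply: le_trans (ler_wpM2r (hnu _ _ _) (absB _ _)) _.
    rewrite mulrDl (splitr eps); apply: lerD => //; exact: ltW.
  apply: funext => x; have := congr1 (fun h => h x) z0; rewrite /subK_fun => /eqP.
  by rewrite subr_eq0 => /eqP.
split; first exact: imgF.
split; first by move=> g [].
move=> Idx Uc Uo cov.
apply: contrapT => nf.
have ne : forall s : seq Idx,
    exists e, P e /\ ~ (exists k, List.In k s /\ Uc k (Rf f e)).
  move=> s; apply: contrapT => H; apply: nf; exists s => g /clos [e Pe <-].
  apply: contrapT => H2; apply: H; exists e; split => //.
pose B (s : seq Idx) := [set e | P e /\ ~ (exists k, List.In k s /\ Uc k (Rf f e))].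
have FB : ProperFilter [set S | exists i, B i `<=` S].
  apply: mk_proper.
  - by constructor; exact: [::].
  - exact: ne.
  - move=> s1 s2; exists (s1 ++ s2) => e [Pe H]; split; split => //.
      by move=> [k [ks hk]]; apply: H; exists k; split => //; apply: List.in_or_app; left.
    by move=> [k [ks hk]]; apply: H; exists k; split => //; apply: List.in_or_app; right.
have [U [UU sFU]] := ultraFilterLemma FB.
have UP : U P by apply: sFU; exists [::] => e [].
have [es [Pes hes]] := ulim_functional a U UU UP.
have Ies : (Rf f @` P) (Rf f es) by exists es.
have [k0 hk0] := cov _ (imgC _ Ies).
have [_ oo] := Uo k0.
have [[j m] [d [d0 hball]]] := oo _ hk0.
have d2 : 0 < d / 2 by rewrite divr_gt0.
have U1 : U (B [:: k0]) by apply: sFU; exists [:: k0].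
have U2 := uconv a f U es UU UP Pes hes hc hf j m _ d2.
have [e [[Pe hn] [_ hu]]] := @filter_ex _ U _ _ (filterI U1 U2).
apply: hn; exists k0; split; first by left.
apply: hball; split; last exact: (sigma e f Pe.1 hf).1.
rewrite /sball; apply: le_lt_trans hu _; rewrite lte_fin ltr_pdivrMr // ltr_pMr //.
by rewrite ltr1n.
Qed.

Lemma img_bounded a f : FVe f ->
  sbounded snk FVk (Rf f @` polarB absK p a).
Proof.
move=> hf; split; first by move=> _ [e Pe <-]; exact: (sigma e f Pe.1 hf).1.
move=> [j m]; have [c hc] := fin_ub (hf.2.2 (j, m, a)).
exists c => _ [e Pe <-]; apply: snk_ub => x.
rewrite (sigma e f Pe.1 hf).2 /=.
have := le_trans (sne_elem j m a f x) hc; rewrite lee_fin => h1.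
by apply: le_trans h1; apply: ler_wpM2r => //; exact: polar_bound.
Qed.

Lemma hcov_pre a f : (forall j m, exists C : set E, Defs.precompactE p C /\
    Njm nu TE iota j m f `<=` C) -> hcov a f.
Proof.
move=> h j m eps eps0; have [C [pc sub]] := h j m.
have [s hs] := pc a eps eps0; exists s => x.
have [v [vin hv]] := hs _ (sub _ (ex_intro2 _ _ x I erefl)).
by exists v; split => //; move: hv; rewrite /sball /pE /subE /= lte_fin.
Qed.

Lemma pscale j m f b x : p b (iota (nu j m x) *: TE m f x) = nu j m x * p b (TE m f x).
Proof. by rewrite pZ hi. Qed.

Lemma N_bound j m f b : FVe f -> exists c, forall x, p b (iota (nu j m x) *: TE m f x) <= c.
Proof.
move=> hf; have [c hc] := fin_ub (hf.2.2 (j, m, b)); exists c => x.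
rewrite pscale mulrC; have := le_trans (sne_elem j m b f x) hc; by rewrite lee_fin.
Qed.

Lemma hcov_d a f : FVe f -> cond_d p nu APE domE TE iota -> hcov a f.
Proof.
move=> hf [X [KK [pi h]]] j m eps eps0.
have [C [_ [hsup hpc]]] := h f hf eps eps0 j m a.
have [s hs] := hpc a eps eps0; exists (0 :: s) => x.
case: (pselect (C (pi m x))) => hx.
  have [v [vin hv]] := hs _ (ex_intro2 _ _ x hx erefl).
  by exists v; split; [right|move: hv; rewrite /sball /pE /subE /= lte_fin].
exists 0; split; first by left.
rewrite subr0 pscale mulrC.
have : ((p a (TE m f x) * nu j m x)%:E <= ereal_sup [set (p a (TE m f x) * nu j m x)%:E
   | x in [set x | ~ C (pi m x)]])%E by apply: ereal_sup_ubound; exists x.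
by move=> /le_lt_trans /(_ hsup); rewrite lte_fin.
Qed.

Lemma ball_open a v eps : sopen subE (pE p) setT (sball subE (pE p) a v eps).
Proof.
split => // y; rewrite /sball /pE /subE /= lte_fin => hy.
exists a, (eps - p a (y - v)); split; first by rewrite subr_gt0.
move=> z [+ _]; rewrite /sball /pE /subE /= !lte_fin => hz.
have -> : z - v = (z - y) + (y - v) by rewrite addrA subrK.
by apply: le_lt_trans (pD _ _ _) _; rewrite -ltrBrDr.
Qed.

Lemma hcov_c a f : FVe f -> cond_c p -> hcov a f.
Proof.
move=> hf hc j m eps eps0.
pose N := [set iota (nu j m x) *: TE m f x | x in [set: omega m]].
case: hc => [sm|sw].
  have bN : sbounded (pE p) setT N.
    split => // b; have [c hc] := N_bound j m f b hf.
    by exists c => _ [x _ <-]; rewrite /pE lee_fin.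
  have [_ [_ cpt]] := sm N bN.
  have [||s hs] := cpt E (fun v => sball subE (pE p) a v eps).
  - by move=> v; exact: ball_open.
  - move=> z _; exists z; rewrite /sball /pE /subE /= subrr p0 lte_fin //.
  exists s => x.
  have Nx : N (iota (nu j m x) *: TE m f x) by exists x.
  have [|v [vin hv]] := hs (iota (nu j m x) *: TE m f x).
    split => // i e e0; exists (iota (nu j m x) *: TE m f x); split => //.
    by rewrite /sball /pE /subE /= subrr p0 lte_fin.
  by exists v; split => //; move: hv; rewrite /sball /pE /subE /= lte_fin.
have [a' ha'] := sw a.
have [c hc] := N_bound j m f a' hf.
set c' := `|c| + 1.
have c'0 : 0 < c' by rewrite ltr_wpDl.
have [s hs] := ha' (eps / c') (divr_gt0 eps0 c'0).
exists (map (fun v => iota c' *: v) s) => x.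
set z := iota (nu j m x) *: TE m f x.
set w := iota c'^-1 *: z.
have [|v [vin hv]] := hs w.
  rewrite /pE /= lte_fin /w pZ hi ?invr_ge0 ?ltW // mulrC ltr_pdivrMr // mul1r.
  by apply: le_lt_trans (hc x) _; apply: le_lt_trans (ler_norm _) _; rewrite ltrDl.
exists (iota c' *: v); split; first exact: List.in_map.
move: hv; rewrite /sball /pE /subE /= lte_fin => hv.
have -> : z - iota c' *: v = iota c' *: (w - v).
  by rewrite scalerBr /w scalerA hiV // scale1r.
by rewrite pZ hi ?ltW // mulrC -ltr_pdivlMr.
Qed.

Lemma main_gen : cond_a absK nu APK domK TK \/ cond_b p nu APE domE TE iota \/
  cond_c p \/ cond_d p nu APE domE TE iota ->
  FVe `<=` FVE_kappa absK p nu APK domK TK.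
Proof.
move=> hc f hf; split.
  by move=> e he; exact: (sigma e f he hf).1.
move=> a; case: hc => [ca|[cb|[cc|cd]]].
- by apply: ca; exact: img_bounded.
- by apply: relcomp => //; apply: hcov_pre => j m; exact: cb f hf j m.
- by apply: relcomp => //; exact: hcov_c.
- by apply: relcomp => //; exact: hcov_d.
Qed.
End Generic.
Theorem lemma3p13 (R : realType) :
  lemma3p13_stmt R R (fun x : R => `|x|) (fun r : R => r) /\
  lemma3p13_stmt R R[i] (fun z : R[i] => Normc.normc z) (fun r : R => (r%:C)%C).
Proof.
split.
- move=> E A p hE Omega J M omega nu hO hJ hM hom hnu hpos APK domK TK APE domE TE hsg hc.
  have ha0 : forall x : R, 0 <= `|x| by move=> x; exact: normr_ge0.
  have haD : forall x y : R, `|x + y| <= `|x| + `|y| by move=> x y; exact: ler_normD.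
  have haM : forall x y : R, `|x * y| = `|x| * `|y| by move=> x y; exact: normrM.
  have haN : forall x : R, `|- x| = `|x| by move=> x; exact: normrN.
  have haz : forall x : R, `|x| = 0 -> x = 0 by move=> x /normr0_eq0.
  have hi : forall r : R, 0 <= r -> `|r| = r by move=> r r0; exact: ger0_norm.
  have hiV : forall r : R, 0 < r -> r * r^-1 = 1 by move=> r r0; rewrite mulfV // gt_eqF.
  refine (main_gen (fun x : R => `|x|) (fun r : R => r) ha0 haD haM haN _ haz hi hiV
    _ p hE nu hnu hom hM hJ APK domK TK APE domE TE hsg hc).
  exact: normr0. exact: ulim_real.
- move=> E A p hE Omega J M omega nu hO hJ hM hom hnu hpos APK domK TK APE domE TE hsg hc.
  have ha0 : forall x : R[i], 0 <= Normc.normc x by move=> x; exact: nc_ge0.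
  have haD : forall x y : R[i], Normc.normc (x + y) <= Normc.normc x + Normc.normc y.
    by move=> x y; exact: le_normcD.
  have haM : forall x y : R[i], Normc.normc (x * y) = Normc.normc x * Normc.normc y.
    by move=> x y; exact: Normc.normcM.
  have haN : forall x : R[i], Normc.normc (- x) = Normc.normc x by move=> x; exact: normcN.
  have haz : forall x : R[i], Normc.normc x = 0 -> x = 0 by move=> x; exact: Normc.eq0_normc.
  have hi : forall r : R, 0 <= r -> Normc.normc ((r%:C)%C) = r by move=> r r0; exact: nc_real.
  have hiV : forall r : R, 0 < r -> (r%:C)%C * (r^-1%:C)%C = 1.
    by move=> r r0; rewrite -rmorphM mulfV // gt_eqF.
  exact: (main_gen (fun z : R[i] => Normc.normc z) (fun r : R => (r%:C)%C) ha0 haD haM haN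
    (@Normc.normc0 R) haz hi hiV (@ulim_cplx R) p hE nu hnu hom hM hJ APK domK TK APE domE TE hsg hc).
Qed.
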